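(* Let $E$ be an evident branch and $\alpha$ a sort. If $E$ contains exactly $n$ disequations at $\alpha$ (formulas of the form $s\neq_\alpha t$), then there are at most $2^n$ $\alpha$-discriminants. If $E$ contains no disequation at $\alpha$, then $\emptyset$ is the only $\alpha$-discriminant.
   Context: Types: a countable set of base types including a distinguished $o$; other base types are sorts. Types: base types and $\sigma\tau$. Countably many names with unique types, infinitely many per type. Terms: names; $st:\mu$ for $s:\tau\mu,t:\tau$; $\lambda x.t:\sigma\tau$ for a name $x:\sigma$, $t:\tau$. $\mathrm{Wff}_\sigma$: terms of type $\sigma$. Logical constants: $\neg:oo$, $=_\sigma:\sigma\sigma o$; other names are variables. Formulas: terms of type $o$; $s=_\sigma t$ is $(=_\sigma s)t$; $s\neq_\sigma t$ is $\neg(s=_\sigma t)$. A fixed type-preserving total normalization operator $[\cdot]$ on terms, with $s$ normal iff $[s]=s$, satisfies $[[s]]=[s]$, $[[s]t]=[st]$, and $[xs_1\dots s_n]=x[s_1]\dots[s_n]$ for any name $x$, $n\ge0$, with $xs_1\dots s_n$ of base type. A branch is a set of normal formulas. $E$ is evident if ($x$ ranges over variables): (DN) $\neg\neg s\in E\Rightarrow s\in E$; (BQ) $s=_ot\in E\Rightarrow$ ($s,t\in E$ or $\neg s,\neg t\in E$); (BE) $s\neq_ot\in E\Rightarrow$ ($s,\neg t\in E$ or $\neg s,t\in E$); (FQ) $s=_{\sigma\tau}t\in E\Rightarrow[su]=[tu]\in E$ for all normal $u:\sigma$; (FE) $s\neq_{\sigma\tau}t\in E\Rightarrow[sx]\neq[tx]\in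 E$ for some variable $x$; (Mat) $xs_1\dots s_n,\neg xt_1\dots t_n\in E\Rightarrow n\ge1$ and $s_i\neq t_i\in E$ for some $i$; (Dec) $xs_1\dots s_n\neq_\alpha xt_1\dots t_n\in E\Rightarrow n\ge 1$ and $s_i\neq t_i\in E$ for some $i$; (Con) $s=_\alpha t,u\neq_\alpha v\in E\Rightarrow$ ($s\neq u,t\neq u\in E$) or ($s\neq v,t\neq v\in E$). A term $u\in\mathrm{Wff}_\alpha$ is $\alpha$-discriminating in $E$ if there is a term $t$ with $u\neq_\alpha t\in E$ or $t\neq_\alpha u\in E$. An $\alpha$-discriminant is a maximal (w.r.t. inclusion) set $a$ of $\alpha$-discriminating terms such that there is no disequation $s\neq t\in E$ with $s,t\in a$. *)

(* Defs.v *)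
From Stdlib Require Import List Arith.
Import ListNotations.

(* Types: base types are indexed by nat; Base 0 is the distinguished type o,
   every other base type is a sort.  Arr s t is the function type "s t". *)
Inductive ty : Type := Base (b : nat) | Arr (s t : ty).

Definition ty_eq_dec : forall s t : ty, {s = t} + {s <> t}.
Proof. decide equality; apply Nat.eq_dec. Defined.

Definition o : ty := Base 0.
Definition is_sort (a : ty) : Prop := exists b, a = Base b /\ b <> 0.

Inductive name : Type :=
| Neg : name
| Eq : ty -> name
| Var : ty -> nat -> name.

Definition name_ty (x : name) : ty :=
  match x with
  | Neg => Arr o o
  | Eq s => Arr s (Arr s o)
  | Var s _ => s
  end.

Definition is_var (x : name) : Prop := exists s i, x = Var s i.

(* Raw terms; well-typed terms are those with typeof t = Some _. *)
Inductive tm : Type :=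
| Nm : name -> tm
| App : tm -> tm -> tm
| Lam : name -> tm -> tm.

Fixpoint typeof (t : tm) : option ty :=
  match t with
  | Nm x => Some (name_ty x)
  | App s u =>
      match typeof s, typeof u with
      | Some (Arr a b), Some a' => if ty_eq_dec a a' then Some b else None
      | _, _ => None
      end
  | Lam x u =>
      match typeof u with
      | Some b => Some (Arr (name_ty x) b)
      | None => None
      end
  end.

Definition apps (s : tm) (args : list tm) : tm := fold_left App args s.

Definition neg (s : tm) : tm := App (Nm Neg) s.
Definition eqn (a : ty) (s t : tm) : tm := App (App (Nm (Eq a)) s) t.
Definition diseq (a : ty) (s t : tm) : tm := neg (eqn a s t).

Record NormOp : Type := {
  norm :> tm -> tm;
  norm_type : forall s a, typeof s = Some a -> typeof (norm s) = Some a;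
  norm_idem : forall s, typeof s <> None -> norm (norm s) = norm s;
  norm_app : forall s t, typeof (App s t) <> None ->
               norm (App (norm s) t) = norm (App s t);
  norm_head : forall (x : name) (args : list tm) (b : nat),
      typeof (apps (Nm x) args) = Some (Base b) ->
      norm (apps (Nm x) args) = apps (Nm x) (map norm args)
}.

Definition normal (N : NormOp) (s : tm) : Prop := N s = s.

Definition branch (N : NormOp) (E : tm -> Prop) : Prop :=
  forall s, E s -> typeof s = Some o /\ normal N s.

Definition evident (N : NormOp) (E : tm -> Prop) : Prop :=
  (forall s, E (neg (neg s)) -> E s) /\
  (forall s t, E (eqn o s t) -> (E s /\ E t) \/ (E (neg s) /\ E (neg t))) /\
  (forall s t, E (diseq o s t) -> (E s /\ E (neg t)) \/ (E (neg s) /\ E t)) /\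
  (forall a b s t, E (eqn (Arr a b) s t) ->
     forall u, typeof u = Some a -> normal N u ->
       E (eqn b (N (App s u)) (N (App t u)))) /\
  (forall a b s t, E (diseq (Arr a b) s t) ->
     exists x, is_var x /\ name_ty x = a /\
       E (diseq b (N (App s (Nm x))) (N (App t (Nm x))))) /\
  (forall x ss ts, is_var x ->
     E (apps (Nm x) ss) -> E (neg (apps (Nm x) ts)) ->
     length ss = length ts /\ 1 <= length ss /\
     exists i a, i < length ss /\ typeof (nth i ss (Nm Neg)) = Some a /\
       E (diseq a (nth i ss (Nm Neg)) (nth i ts (Nm Neg)))) /\
  (forall al x ss ts, is_sort al -> is_var x ->
     E (diseq al (apps (Nm x) ss) (apps (Nm x) ts)) ->
     length ss = length ts /\ 1 <= length ss /\
     exists i a, i < length ss /\ typeof (nth i ss (Nm Neg)) = Some a /\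
       E (diseq a (nth i ss (Nm Neg)) (nth i ts (Nm Neg)))) /\
  (forall al s t u v, is_sort al ->
     E (eqn al s t) -> E (diseq al u v) ->
     (E (diseq al s u) /\ E (diseq al t u)) \/
     (E (diseq al s v) /\ E (diseq al t v))).

Definition discriminating (E : tm -> Prop) (al : ty) (u : tm) : Prop :=
  typeof u = Some al /\ exists t, E (diseq al u t) \/ E (diseq al t u).

Definition disc_candidate (E : tm -> Prop) (al : ty) (a : tm -> Prop) : Prop :=
  (forall u, a u -> discriminating E al u) /\
  ~ (exists s t, E (diseq al s t) /\ a s /\ a t).

Definition discriminant (E : tm -> Prop) (al : ty) (a : tm -> Prop) : Prop :=
  disc_candidate E al a /\
  forall b, disc_candidate E al b -> (forall u, a u -> b u) -> forall u, b u -> a u.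

Definition n_diseqs (E : tm -> Prop) (al : ty) (n : nat) : Prop :=
  exists l : list tm, NoDup l /\ length l = n /\
    forall f, (E f /\ exists s t, f = diseq al s t) <-> In f l.

Definition at_most_discriminants (E : tm -> Prop) (al : ty) (m : nat) : Prop :=
  exists l : list (tm -> Prop), length l <= m /\
    forall a, discriminant E al a -> exists b, In b l /\ forall u, a u <-> b u.

(* Main.v *)
Require Import Defs.
From Stdlib Require Import List Arith Lia Classical.
Import ListNotations.

Definition sel (f : tm) (b : bool) : tm :=
  match f with
  | App (Nm Neg) (App (App (Nm (Eq _)) s) t) => if b then s else t
  | _ => f
  end.

Fixpoint allbits (n : nat) : list (list bool) :=
  match n with
  | 0 => [[]]
  | S m => map (cons true) (allbits m) ++ map (cons false) (allbits m)
  end.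

Lemma allbits_len n : length (allbits n) = 2 ^ n.
Proof. induction n; simpl; auto. rewrite length_app, !length_map, IHn; lia. Qed.

Lemma allbits_in bs : In bs (allbits (length bs)).
Proof.
  induction bs as [|b bs IH]; simpl; [left; reflexivity|].
  destruct b; apply in_or_app; [left|right]; apply in_map; auto.
Qed.

Definition Sb (E : tm -> Prop) al (l : list tm) (bits : list bool) (u : tm) : Prop :=
  discriminating E al u /\
  ~ (exists k, k < length l /\ u = sel (nth k l (Nm Neg)) (nth k bits false)).

Lemma exists_bits (a : tm -> Prop) l :
  (forall f, In f l -> exists b, ~ a (sel f b)) ->
  exists bits, length bits = length l /\
    forall k, k < length l -> ~ a (sel (nth k l (Nm Neg)) (nth k bits false)).
Proof.
  induction l as [|f0 l IH]; intros H.
  - exists []. split; auto. intros k Hk; simpl in Hk; lia.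
  - destruct IH as [bits [Hl Hk]]. { intros; apply H; right; auto. }
    destruct (H f0 (or_introl eq_refl)) as [b Hb].
    exists (b :: bits). split; simpl; auto.
    intros [|k] Hk'; simpl; auto. apply Hk; simpl in Hk'; lia.
Qed.

Theorem proposition6p3 (N : NormOp) (E : tm -> Prop) (al : ty) :
  branch N E -> evident N E -> is_sort al ->
  (forall n, n_diseqs E al n -> at_most_discriminants E al (2 ^ n)) /\
  ((forall s t, ~ E (diseq al s t)) ->
     forall a, discriminant E al a <-> (forall u, ~ a u)).
Proof.
  intros Hbr Hev Hsort. split.
  - intros n [l [Hnd [Hlen Hl]]].
    exists (map (Sb E al l) (allbits n)). split.
    { rewrite length_map, allbits_len; lia. }
    intros a [[Hc Hnp] Hmax].
    assert (Hsel: forall f, In f l -> exists b, ~ a (sel f b)).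
    { intros f Hf. apply Hl in Hf. destruct Hf as [HE [s [t ->]]].
      destruct (classic (a s)) as [Hs|Hs].
      - exists false; simpl. intro Ht. apply Hnp; exists s, t; auto.
      - exists true; simpl; exact Hs. }
    destruct (exists_bits a l Hsel) as [bits [Hbl Hbk]].
    exists (Sb E al l bits). split.
    { apply in_map. rewrite <- Hlen, <- Hbl. apply allbits_in. }
    intro u; split.
    + intros Hu. split. { apply Hc; auto. }
      intros [k [Hk ->]]. exact (Hbk k Hk Hu).
    + intros [Hdu Hex]. destruct (classic (a u)) as [Hau|Hau]; auto. exfalso.
      assert (Hb: disc_candidate E al (fun v => a v \/ v = u)).
      { split.
        - intros v [Hv| ->]; auto.
        - intros [s [t [Hst [Hs Ht]]]].
          assert (Hin: In (diseq al s t) l) by (apply Hl; split; eauto).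
          destruct (In_nth _ _ (Nm Neg) Hin) as [k [Hk Hnth]].
          pose proof (Hbk k Hk) as Hnk. rewrite Hnth in Hnk.
          destruct Hs as [Hs| ->]; destruct Ht as [Ht| ->].
          * apply Hnp; eauto.
          * apply Hex. exists k. split; auto. rewrite Hnth.
            destruct (nth k bits false); simpl in *; [contradiction | reflexivity].
          * apply Hex. exists k. split; auto. rewrite Hnth.
            destruct (nth k bits false); simpl in *; [reflexivity | contradiction].
          * apply Hex. exists k. split; auto. rewrite Hnth.
            destruct (nth k bits false); reflexivity. }
      apply Hau. exact (Hmax _ Hb (fun v h => or_introl h) u (or_intror eq_refl)).
  - intros Hno a. split.
    + intros [[Hc _] _] u Hu. destruct (Hc u Hu) as [_ [t [H|H]]]; eapply Hno; eauto.
    + intros Ha. split; [split|].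
      * intros u Hu; exfalso; eapply Ha; eauto.
      * intros [s [t [H _]]]; eapply Hno; eauto.
      * intros b [Hbc _] _ u Hu. destruct (Hbc u Hu) as [_ [t [H|H]]];
          exfalso; eapply Hno; eauto.
Qed.
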